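(* Let $q\geq 3$ be an odd prime power, $m\geq 2$, and $\delta_2=(q-1)q^{m-1}-q^{\lfloor\frac{2m-1}{3}\rfloor}-q^{\lfloor\frac{m-1}{3}\rfloor}-1$. Then the $q$-cyclotomic coset $C_{\delta_2}^{(q,q^m-1)}$ has size $m$ if $3\nmid m$ and size $\frac{m}{3}$ if $3\mid m$.
   Context: $C_i^{(q,N)}=\{i,iq,iq^2,\ldots\}\bmod N$ denotes the $q$-cyclotomic coset of $i$ modulo $N$. *)

(* Defs.v *)
From mathcomp Require Import all_boot.
Set Implicit Arguments. Unset Strict Implicit. Unset Printing Implicit Defensive.

(* The q-cyclotomic coset of i modulo N: C_i^{(q,N)} = { i q^j mod N : j >= 0 },
   represented as a duplicate-free list of residues in [0, N).  Since the
   sequence (i q^j mod N)_j takes at most N distinct values and is eventually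
   periodic with preperiod + period <= N, the exponents j < N already produce
   every element of the coset. *)
Definition cyclotomic_coset (q N i : nat) : seq nat :=
  undup [seq (i * q ^ j) %% N | j <- iota 0 N].

Definition prime_power (q : nat) : Prop :=
  exists p k, prime p /\ 0 < k /\ q = p ^ k.

Definition delta2 (q m : nat) : nat :=
  (q - 1) * q ^ (m - 1) - q ^ ((2 * m - 1) %/ 3) - q ^ ((m - 1) %/ 3) - 1.

(* Main.v *)
Require Import Defs.
From mathcomp Require Import all_boot zify.
Set Implicit Arguments. Unset Strict Implicit.

Lemma modMr N a b c : a %% N = b %% N -> (a * c) %% N = (b * c) %% N.
Proof. by move=> H; rewrite -modnMml H modnMml. Qed.

Lemma coset_size_gen (q N i t : nat) :
  0 < t -> t <= N -> (i * q ^ t) %% N = i %% N ->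
  (forall j, 0 < j < t -> (i * q ^ j) %% N != i %% N) ->
  size (undup [seq (i * q ^ j) %% N | j <- iota 0 N]) = t.
Proof.
move=> t0 tN Ht Hmin.
set g := fun j => (i * q ^ j) %% N.
have per : forall j, g (j + t) = g j.
  move=> j; rewrite /g expnD mulnA mulnC mulnA [q ^ t * i]mulnC.
  by rewrite (modMr _ Ht) mulnC.
have perm' : forall n r, g (n * t + r) = g r.
  elim=> [|n IH] r; first by rewrite mul0n add0n.
  by rewrite mulSn -addnA addnC per IH.
have red : forall j, g j = g (j %% t).
  by move=> j; rewrite {1}(divn_eq j t) perm'.
have canc : forall j1 d, j1 + d < t -> g (j1 + d) = g j1 -> g d = i %% N.
  move=> j1 d Hl Hg.
  have := modMr (q ^ (t - j1)) Hg.
  rewrite -!mulnA -!expnD.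
  have -> : j1 + d + (t - j1) = t + d by lia.
  have -> : j1 + (t - j1) = t by lia.
  rewrite Ht expnD mulnA (modMr _ Ht) => H; rewrite /g; exact: H.
have inj : {in iota 0 t &, injective g}.
  move=> j1 j2; rewrite !mem_iota !add0n => /= H1 H2 Hg.
  case: (ltngtP j1 j2) => // Hlt.
  - have := canc j1 (j2 - j1); rewrite subnKC ?(ltnW Hlt) // => /(_ H2 (esym Hg)).
    move=> Hc; have := Hmin (j2 - j1); rewrite /g in Hc; rewrite Hc eqxx; lia.
  - have := canc j2 (j1 - j2); rewrite subnKC ?(ltnW Hlt) // => /(_ H1 Hg).
    move=> Hc; have := Hmin (j1 - j2); rewrite /g in Hc; rewrite Hc eqxx; lia.
have U : uniq (map g (iota 0 t)) by rewrite (map_inj_in_uniq inj) iota_uniq.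
rewrite -(size_iota 0 t) -(size_map g).
apply: perm_size; apply: uniq_perm; rewrite ?undup_uniq //.
move=> x; rewrite mem_undup; apply/mapP/mapP => -[j Hj ->].
- exists (j %% t); last by rewrite red.
  by rewrite mem_iota add0n ltn_pmod.
- exists j => //; move: Hj; rewrite !mem_iota !add0n; lia.
Qed.

Definition fsum (q : nat) (s : seq nat) := sumn [seq q ^ x | x <- s].
Definition shift (s : seq nat) := [seq x.-1 | x <- s & x != 0].

Lemma fsum_split q s : fsum q s = count_mem 0 s + q * fsum q (shift s).
Proof.
elim: s => [|x s IH] //=; first by rewrite /fsum /= muln0.
rewrite /fsum /= -/(fsum q s) IH; case: x => [|x] /=.
  by rewrite expn0 addnA.
rewrite /= expnS; change (sumn _) with (fsum q (shift s)); lia.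
Qed.

Lemma count_shift e s : count_mem e (shift s) = count_mem e.+1 s.
Proof.
elim: s => [|x s IH] //=; case: x => [|x] //=; rewrite -IH //.
Qed.

Lemma digit q s e : 0 < q -> (forall x, count_mem x s < q) ->
  fsum q s %/ q ^ e %% q = count_mem e s.
Proof.
move=> q0; elim: e s => [|e IH] s Hc.
  by rewrite expn0 divn1 fsum_split addnC mulnC modnMDl modn_small.
rewrite expnS divnMA fsum_split addnC mulnC divnMDl // (divn_small (Hc 0)) addn0.
rewrite IH -?count_shift // => x; rewrite count_shift; exact: Hc.
Qed.

Lemma mod2 N a b a' b' : a %% N = a' %% N -> b %% N = b' %% N ->
  (a + b) %% N = (a' + b') %% N.
Proof. by move=> Ha Hb; rewrite -modnDm Ha Hb modnDm. Qed.

Lemma mod3 N x y z x' y' z' : x %% N = x' %% N -> y %% N = y' %% N -> z %% N = z' %% N ->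
  (x + y + z) %% N = (x' + y' + z') %% N.
Proof. by move=> Hx Hy Hz; apply: mod2 => //; apply: mod2. Qed.

Lemma equiv_mod N x y c : x + y = N ->
  (x * c == x %[mod N]) = (y * c == y %[mod N]).
Proof.
case: c => [|c] H.
  rewrite !muln0 ![0 %% N == _]eq_sym !eqn_mod_dvd // !subn0.
  by rewrite -H -{2}(addnK y x) dvdn_subr ?leq_addl ?dvdnn.
rewrite !eqn_mod_dvd ?leq_pmulr // -{2}(muln1 x) -{2}(muln1 y) -!mulnBr.
have e : x * (c.+1 - 1) = N * (c.+1 - 1) - y * (c.+1 - 1) by rewrite -H mulnDl addnK.
by rewrite e (dvdn_subr _ (dvdn_mulr _ (dvdnn N))) // leq_mul // -H leq_addl.
Qed.
Lemma cnt3 x y z (e : nat) : x != z -> count_mem e [:: x; y; z] <= 2.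
Proof.
move=> H /=; case: (eqVneq x e) => [<-|_]; last by case: (y == e); case: (z == e).
by rewrite [z == x]eq_sym (negbTE H); case: (y == x).
Qed.

Lemma qpow_mod q m X : 0 < m -> 1 < q ^ m - 1 ->
  q ^ X %% (q ^ m - 1) = q ^ (X %% m) %% (q ^ m - 1).
Proof.
move=> m0 N1; set N := q ^ m - 1.
have qm : q ^ m %% N = 1.
  have -> : q ^ m = 1 * N + 1 by rewrite /N; lia.
  by rewrite modnMDl modn_small.
rewrite {1}(divn_eq X m) expnD [X %/ m * m]mulnC expnM -modnMml -modnXm qm exp1n.
by rewrite modnMml mul1n.
Qed.

Lemma bound3 q m x y z : 3 <= q -> 2 <= m -> x < m -> y < m -> z < m -> x != z ->
  q ^ x + q ^ y + q ^ z < q ^ m - 1.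
Proof.
move=> q3 m2 xm ym zm xz.
have q0 : 0 < q by lia.
set R := q ^ (m - 2).
have hP : q ^ (m - 1) = q * R by rewrite /R -expnS; congr (_ ^ _); lia.
have hM : q ^ m = q * (q * R) by rewrite /R -!expnS; congr (_ ^ _); lia.
have R1 : 1 <= R by rewrite expn_gt0 q0.
have le1 : forall u, u < m -> q ^ u <= q * R.
  by move=> u um; rewrite -hP leq_pexp2l //; lia.
have le2 : forall u, u < m - 1 -> q ^ u <= R.
  by move=> u um; rewrite leq_pexp2l //; lia.
have := le1 _ xm; have := le1 _ ym; have := le1 _ zm.
rewrite hM.
have [xs|xs] := ltnP x (m - 1).
  have := le2 _ xs; nia.
have [zs|zs] := ltnP z (m - 1).
  have := le2 _ zs; nia.
exfalso; move/eqP: xz; lia.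
Qed.

Theorem lemma19 (q m : nat) :
  prime_power q -> odd q -> 3 <= q -> 2 <= m ->
  size (cyclotomic_coset q (q ^ m - 1) (delta2 q m)) =
    (if 3 %| m then m %/ 3 else m).
Proof.
move=> _ _ q3 m2.
have q0 : 0 < q by lia.
set N := q ^ m - 1.
set a := (2 * m - 1) %/ 3; set b := (m - 1) %/ 3.
set P := q ^ (m - 1).
have hM : q ^ m = q * P by rewrite /P -expnS; congr (_ ^ _); lia.
have P3 : q <= P by rewrite /P -{1}(expn1 q) leq_pexp2l //; lia.
have N1 : 1 < N by rewrite /N hM; nia.
have am : a < m by rewrite /a; lia.
have bm : b < m - 1 by rewrite /b; lia.
have aP : q ^ a <= P by rewrite /P leq_pexp2l //; lia.
have bP : q ^ b < P by rewrite /P ltn_exp2l //; lia.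
set w := P + q ^ a + q ^ b.
have hd : delta2 q m + w = N.
  rewrite /delta2 -/a -/b -/P /w /N hM; nia.
have tN : m <= N by have := ltn_expl m (_ : 1 < q); rewrite /N; lia.
have qm : q ^ m %% N = 1.
  have -> : q ^ m = 1 * N + 1 by rewrite /N; lia.
  by rewrite modnMDl modn_small.
have eqv : forall j, ((delta2 q m * q ^ j) %% N == delta2 q m %% N) =
    ((w * q ^ j) %% N == w %% N) by move=> j; exact: equiv_mod.
have rot : forall j, (w * q ^ j) %% N =
    (q ^ ((m - 1 + j) %% m) + q ^ ((a + j) %% m) + q ^ ((b + j) %% m)) %% N.
  move=> j; rewrite /w !mulnDl /P -!expnD.
  by apply: mod3; apply: qpow_mod; lia.
have fs3 : forall x y z, fsum q [:: x; y; z] = q ^ x + q ^ y + q ^ z.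
  by move=> x y z; rewrite /fsum /= addn0 addnA.
have bne : m - 1 != b by apply/eqP; lia.
have wN : w < N by apply: bound3 => //; lia.
have key : forall j, (w * q ^ j) %% N = w %% N -> m %| 3 * j.
  move=> j.
  set X := (m - 1 + j) %% m; set A := (a + j) %% m; set B := (b + j) %% m.
  have XB : X != B.
    apply/negP => /eqP; rewrite /X /B => /eqP; rewrite eqn_modDr !modn_small //; lia.
  rewrite rot (modn_small (bound3 _ _ _ _ _ XB)) ?ltn_pmod // ?(modn_small wN); try lia.
  move=> HF.
  have C : forall e, count_mem e [:: X; A; B] = count_mem e [:: m - 1; a; b].
    move=> e.
    rewrite -(@digit q [:: X; A; B] e q0); last by move=> x; apply: leq_ltn_trans (@cnt3 X A B x XB) _.
    rewrite -(@digit q [:: m - 1; a; b] e q0); last by move=> x; apply: leq_ltn_trans (@cnt3 (m - 1) a b x bne) _.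
    by rewrite !fs3 HF.
  have Hp : perm_eq [:: X; A; B] [:: m - 1; a; b] by apply/allP => x _; apply/eqP; exact: C.
  have Hs := perm_sumn Hp; rewrite /= !addn0 in Hs.
  have E : (m - 1 + a + b + 3 * j) %% m = (m - 1 + a + b) %% m.
    transitivity (((m - 1 + j) + (a + j) + (b + j)) %% m); first by congr (_ %% _); lia.
    have -> : m - 1 + a + b = X + A + B by lia.
    by apply: mod3; rewrite modn_mod.
  move: E; rewrite -[in RHS](addn0 (m - 1 + a + b)) => /eqP; rewrite eqn_modDl mod0n.
  by [].
rewrite /cyclotomic_coset.
case: ifP => H3.
- set k := m %/ 3.
  have mk : m = 3 * k by rewrite /k mulnC divnK.
  apply: coset_size_gen; [lia | lia | | ].
  + apply/eqP; rewrite eqv; apply/eqP; rewrite rot.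
    have e1 : (m - 1 + k) %% m = b.
      have -> : m - 1 + k = b + m by rewrite /b; lia.
      by rewrite modnDr modn_small //; lia.
    have e2 : (a + k) %% m = m - 1 by rewrite modn_small; rewrite /a; lia.
    have e3 : (b + k) %% m = a by rewrite modn_small; rewrite /a /b; lia.
    by rewrite e1 e2 e3 /w; congr (_ %% _); lia.
  + move=> j /andP[j0 jk]; rewrite eqv; apply/negP => /eqP /key.
    rewrite {1}mk dvdn_pmul2l // => /dvdn_leq; lia.
- apply: coset_size_gen => //; first lia.
  + by rewrite -modnMmr qm muln1.
  + move=> j /andP[j0 jm]; rewrite eqv; apply/negP => /eqP /key.
    have cm : coprime m 3 by rewrite coprime_sym prime_coprime // H3.
    rewrite Gauss_dvdr // => /dvdn_leq; lia.
Qed.
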